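(* Let $K\ge 3$, $d_2,\dots,d_K\ge 2$, $k\ge 1$ and $d_1=d_2\cdots d_K-k\ge 1$. If $\mathbb{C}^{k}\otimes\mathbb{C}^{d_2}\otimes\cdots\otimes\mathbb{C}^{d_K}$ has only finitely many SLOCC equivalence classes, then $\mathbb{C}^{d_1}\otimes\mathbb{C}^{d_2}\otimes\cdots\otimes\mathbb{C}^{d_K}$ has only finitely many SLOCC equivalence classes of SLOCC maximal states.
   Context: For a multipartite space $\mathbb{C}^{e_1}\otimes\cdots\otimes\mathbb{C}^{e_m}$ with parties the tensor factors, $|\psi\rangle\le_{\mathrm{SLOCC}}|\phi\rangle$ means $(L_1\otimes\cdots\otimes L_m)|\phi\rangle=|\psi\rangle$ for some linear operators $L_i$ on $\mathbb{C}^{e_i}$; two states are SLOCC equivalent if each is $\le_{\mathrm{SLOCC}}$ the other (equivalently, related by $L_1\otimes\cdots\otimes L_m$ with all $L_i$ invertible). A state $|\phi\rangle$ is SLOCC maximal if for every $|\psi\rangle$ in the space, $|\phi\rangle\le_{\mathrm{SLOCC}}|\psi\rangle$ implies $|\psi\rangle\le_{\mathrm{SLOCC}}|\phi\rangle$. *)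

(* Defs.v *)
From HB Require Import structures.
From mathcomp Require Import all_boot all_order all_algebra.
Set Implicit Arguments. Unset Strict Implicit. Unset Printing Implicit Defensive.
Import Order.TTheory GRing.Theory Num.Theory.
Local Open Scope ring_scope.

(* Multi-indices of C^{d_0} (x) ... (x) C^{d_{K-1}}: the parties are 'I_K. *)
Definition midx (K : nat) (d : 'I_K -> nat) := {dffun forall i : 'I_K, 'I_(d i)}.

(* A state (tensor) = its coordinate function in the product basis. *)
Definition tensor (F : Type) (K : nat) (d : 'I_K -> nat) := midx d -> F.

Definition local_op (F : comNzRingType) (K : nat) (d : 'I_K -> nat)
  (L : forall i : 'I_K, 'M[F]_(d i)) (phi : tensor F d) : tensor F d :=
  fun j => \sum_(j' : midx d) (\prod_(i < K) L i (j i) (j' i)) * phi j'.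

Definition slocc_le (F : comNzRingType) (K : nat) (d : 'I_K -> nat)
  (psi phi : tensor F d) : Prop :=
  exists L : forall i : 'I_K, 'M[F]_(d i), local_op L phi = psi.

Definition slocc_equiv (F : comNzRingType) (K : nat) (d : 'I_K -> nat)
  (psi phi : tensor F d) : Prop := slocc_le psi phi /\ slocc_le phi psi.

Definition slocc_maximal (F : comNzRingType) (K : nat) (d : 'I_K -> nat)
  (phi : tensor F d) : Prop :=
  forall psi : tensor F d, slocc_le phi psi -> slocc_le psi phi.

Definition finitely_many_classes (F : comNzRingType) (K : nat) (d : 'I_K -> nat) : Prop :=
  exists (n : nat) (r : 'I_n -> tensor F d),
    forall phi : tensor F d, exists m : 'I_n, slocc_equiv phi (r m).

Definition finitely_many_maximal_classes (F : comNzRingType) (K : nat) (d : 'I_K -> nat) : Prop :=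
  exists (n : nat) (r : 'I_n -> tensor F d),
    forall phi : tensor F d, slocc_maximal phi -> exists m : 'I_n, slocc_equiv phi (r m).

(* Main.v *)
Require Import Defs.
From HB Require Import structures.
From mathcomp Require Import all_boot all_order all_algebra.
From Stdlib Require Import FunctionalExtensionality ClassicalEpsilon.
From Stdlib Require Import FunctionalExtensionality.
Set Implicit Arguments. Unset Strict Implicit. Unset Printing Implicit Defensive.
Import Order.TTheory GRing.Theory Num.Theory.
Local Open Scope ring_scope.

Section Distr.
Variable R : comNzRingType.
Variables (I : finType) (T_ : I -> finType).

Lemma prod_sum_dep (F : forall i : I, T_ i -> R) :
  \prod_(i : I) \sum_(a : T_ i) F i a =
  \sum_(f : {dffun forall i : I, T_ i}) \prod_(i : I) F i (f i).
Proof.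
pose P_ := fun i => [ffun a => F i a].
transitivity (\prod_(i : I) \sum_(a : T_ i) P_ i a).
  by apply: eq_bigr => i _; apply: eq_bigr => a _; rewrite ffunE.
under eq_bigr do rewrite (big_tag (op := +%R) P_).
rewrite (bigA_distr_big_dep (fun i => tagged_with T_ i)).
rewrite -(@big_fprod R 0 1 *%R +%R I T_ P_).
rewrite (reindex (@fprod_of_dffun I T_)); last exact/onW_bij/fprod_of_dffun_bij.
apply: eq_bigr => f _; apply: eq_bigr => i _.
by rewrite /fprod_of_dffun fprodE ffunE.
Qed.
End Distr.

Section LocalOps.
Variable F : comNzRingType.
Variables (K : nat) (e : 'I_K -> nat).

Definition kr (L : forall i : 'I_K, 'M[F]_(e i)) (j j' : midx e) : F :=
  \prod_(i < K) L i (j i) (j' i).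

Definition mulfam (L M : forall i : 'I_K, 'M[F]_(e i)) : forall i, 'M[F]_(e i) :=
  fun i => L i *m M i.

Lemma kr_mul L M j j'' :
  \sum_(j' : midx e) kr L j j' * kr M j' j'' = kr (mulfam L M) j j''.
Proof.
rewrite /kr /mulfam.
under [RHS]eq_bigr do rewrite mxE.
rewrite (prod_sum_dep (fun i a => L i (j i) a * M i a (j'' i))).
by apply: eq_bigr => f _; rewrite big_split.
Qed.

Lemma local_opE L (phi : tensor F e) j :
  local_op L phi j = \sum_(j' : midx e) kr L j j' * phi j'.
Proof. by []. Qed.

Lemma local_op_comp L M (phi : tensor F e) :
  local_op L (local_op M phi) = local_op (mulfam L M) phi.
Proof.
apply: functional_extensionality => j; rewrite !local_opE.
under eq_bigr do rewrite local_opE big_distrr.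
rewrite exchange_big; apply: eq_bigr => j'' _.
rewrite -kr_mul big_distrl; apply: eq_bigr => j' _.
exact: mulrA.
Qed.

Lemma kr1 j j' : kr (fun i => 1%:M) j j' = (j == j')%:R.
Proof.
rewrite /kr; have [->|neq] := eqVneq j j'.
  by rewrite big1 // => i _; rewrite mxE eqxx.
have [i Hi] : exists i, j i != j' i.
  apply/existsP; apply: contraR neq => /existsPn H.
  by apply/eqP/ffunP => i; apply/eqP; move: (H i); rewrite negbK.
by rewrite (bigD1 i) //= mxE (negbTE Hi) mul0r.
Qed.

Lemma local_op1 (phi : tensor F e) : local_op (fun i => 1%:M) phi = phi.
Proof.
apply: functional_extensionality => j; rewrite local_opE.
rewrite (bigD1 j) //= kr1 eqxx mul1r big1 ?addr0 // => j' Hj'.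
by rewrite kr1 eq_sym (negbTE Hj') mul0r.
Qed.

Lemma slocc_le_trans (x y z : tensor F e) :
  slocc_le x y -> slocc_le y z -> slocc_le x z.
Proof.
move=> [A HA] [B HB]; exists (mulfam A B).
by rewrite -local_op_comp HB HA.
Qed.

End LocalOps.
Section LinAlg.
Variable F : fieldType.

Definition pw n (A : 'M[F]_n) m := iter m (mulmx A) 1%:M.

Lemma pwS n (A : 'M[F]_n) m : pw A m.+1 = A *m pw A m.
Proof. by []. Qed.

Lemma pwSr n (A : 'M[F]_n) m : pw A m.+1 = pw A m *m A.
Proof.
elim: m => [|m IH].
  by rewrite /pw /= mulmx1 mul1mx.
by rewrite (pwS A m.+1) [X in A *m X]IH mulmxA -(pwS A m).
Qed.

Lemma pw_stable n (A : 'M[F]_n) m : (n <= m)%N ->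
  \rank (pw A m.+1) = \rank (pw A m).
Proof.
pose P j := (pw A j <= pw A j.+1)%MS.
have sub j : (pw A j.+1 <= pw A j)%MS by rewrite pwS submxMl.
have prop j : P j -> P j.+1.
  rewrite /P => H; rewrite [pw A j.+1]pwSr [pw A j.+2]pwSr; exact: submxMr.
have cnt j : (exists2 i, (i < j)%N & P i) \/ (\rank (pw A j) + j <= n)%N.
  elim: j => [|j [IH|IH]].
  - by right; rewrite addn0 /pw /= mxrank1.
  - by left; case: IH => i Hi Pi; exists i => //; apply: ltnW.
  - case Pj: (P j); first by left; exists j.
    right; have := ltn_leqif (mxrank_leqif_sup (sub j)).
    rewrite -/(P j) Pj /= => Hlt.
    rewrite addnS; apply: leq_trans IH; by rewrite ltn_add2r.
move=> le_nm.
have [[i Hi Pi]|] := cnt n.+1; last first.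
  by rewrite addnS ltnNge leq_addl.
have Pm : forall m', (i <= m')%N -> P m'.
  elim=> [|m' IHm]; first by rewrite leqn0 => /eqP <-.
  rewrite leq_eqVlt => /orP[/eqP <- //|]; rewrite ltnS => /IHm; exact: prop.
have := Pm m; rewrite /P => H; apply/eqP; rewrite eqn_leq !mxrankS //.
  by apply: H; apply: leq_trans le_nm; rewrite -ltnS.
Qed.

Definition blockT r n (G : 'M[F]_r) : 'M[F]_n :=
  (pid_mx r : 'M[F]_(n, r)) *m G *m (pid_mx r : 'M[F]_(r, n)) + copid_mx r.

Lemma PP' r n : (r <= n)%N -> (pid_mx r : 'M[F]_(r, n)) *m (pid_mx r : 'M[F]_(n, r)) = 1%:M.
Proof. by move=> le_rn; rewrite mul_pid_mx !minnn (minn_idPr le_rn) pid_mx_1. Qed.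

Lemma P'C r n : (r <= n)%N -> (pid_mx r : 'M[F]_(r, n)) *m copid_mx r = 0.
Proof. by move=> le_rn; rewrite mul_pid_mx_copid. Qed.

Lemma pid_blockT r n (G : 'M[F]_r) : (r <= n)%N ->
  (pid_mx r : 'M[F]_(r, n)) *m blockT n G = G *m pid_mx r.
Proof.
move=> le_rn; rewrite /blockT mulmxDr P'C // addr0 !mulmxA PP' // mul1mx.
done.
Qed.

Lemma blockT_mul r n (G H : 'M[F]_r) : (r <= n)%N ->
  blockT n G *m blockT n H = blockT n (G *m H).
Proof.
move=> le_rn.
have key (a b c : 'M[F]_n) : (a + c) *m (b + c) = a *m b + a *m c + (c *m b + c *m c).
  by rewrite mulmxDl !mulmxDr addrA.
rewrite /blockT key.
rewrite -!mulmxA P'C // !mulmx0 addr0 copid_mx_id //.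
rewrite (mulmxA (pid_mx r : 'M[F]_(r, n))) PP' // mul1mx.
rewrite !mulmxA mul_copid_mx_pid // !mul0mx add0r.
done.
Qed.

Lemma blockT1 r n : (r <= n)%N -> blockT n (1%:M : 'M[F]_r) = 1%:M.
Proof.
move=> le_rn; rewrite /blockT mulmx1 mul_pid_mx !minnn.
by rewrite /copid_mx addrC subrK.
Qed.

Lemma blockT_unit r n (G : 'M[F]_r) : (r <= n)%N -> G \in unitmx -> blockT n G \in unitmx.
Proof.
move=> le_rn uG.
suff : blockT n G *m blockT n (invmx G) = 1%:M by case/mulmx1_unit.
by rewrite blockT_mul // mulmxV // blockT1.
Qed.

Definition frame_map r n (R B : 'M[F]_(r, n)) : 'M[F]_n :=
  invmx (row_ebase R) *m blockT n (invmx (col_ebase R) *m col_ebase B) *m row_ebase B.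

Lemma frame_mapP r n (R B : 'M[F]_(r, n)) :
  row_free R -> row_free B ->
  frame_map R B \in unitmx /\ R *m frame_map R B = B.
Proof.
move=> fR fB.
have rR : \rank R = r by apply/eqP.
have rB : \rank B = r by apply/eqP.
have le_rn : (r <= n)%N by rewrite -{1}rR rank_leq_col.
split.
  rewrite /frame_map !unitmx_mul unitmx_inv !row_ebase_unit blockT_unit //.
  by rewrite unitmx_mul unitmx_inv !col_ebase_unit.
rewrite /frame_map -{1}(mulmx_ebase R) rR !mulmxA.
rewrite -(mulmxA _ (row_ebase R)) mulmxV ?row_ebase_unit // mulmx1.
rewrite -(mulmxA _ (pid_mx r)) pid_blockT // !mulmxA.
have EB := mulmx_ebase B; rewrite rB in EB.
by rewrite mulmxV ?col_ebase_unit // mul1mx EB.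
Qed.

Definition extmx n (X Y : 'M[F]_n) : 'M[F]_n := frame_map (row_base X) (row_base X *m Y).

Lemma extmxP n (X Y : 'M[F]_n) : \rank (X *m Y) = \rank X ->
  extmx X Y \in unitmx /\ X *m extmx X Y = X *m Y.
Proof.
move=> rXY.
have fR : row_free (row_base X) by apply: row_base_free.
have fB : row_free (row_base X *m Y).
  by rewrite /row_free (eqmxMr Y (eq_row_base X)) rXY.
have [uD HD] := frame_mapP fR fB; split => //.
have sXR : (X <= row_base X)%MS by rewrite eq_row_base.
rewrite -{1}(mulmxKpV sXR) -mulmxA /extmx HD.
by rewrite mulmxA (mulmxKpV sXR).
Qed.

Definition colext n (A H : 'M[F]_n) : 'M[F]_n := (extmx H^T A^T)^T.

Lemma colextP n (A H : 'M[F]_n) : \rank (A *m H) = \rank H ->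
  colext A H \in unitmx /\ colext A H *m H = A *m H.
Proof.
move=> r1; have r2 : \rank (H^T *m A^T) = \rank H^T by rewrite -trmx_mul !mxrank_tr.
have [u E] := extmxP r2; split; first by rewrite unitmx_tr.
have tr (M : 'M[F]_n) : M^T *m H = (H^T *m M)^T by rewrite trmx_mul trmxK.
by rewrite /colext tr E trmx_mul !trmxK.
Qed.
End LinAlg.

Section WeakStrong.
Variable F : fieldType.
Variables (K : nat) (e : 'I_K -> nat).

Lemma local_op_ext (L L' : forall i : 'I_K, 'M[F]_(e i)) (phi : tensor F e) :
  (forall i, L i = L' i) -> local_op L phi = local_op L' phi.
Proof. by move=> H; have -> : L = L' by apply: functional_extensionality_dep. Qed.

Lemma weak_strong (x y : tensor F e) :
  slocc_le x y -> slocc_le y x ->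
  exists C : forall i, 'M[F]_(e i), (forall i, C i \in unitmx) /\ local_op C y = x.
Proof.
move=> [A HA] [B HB].
pose G := mulfam B A.
have Gy : local_op G y = y by rewrite -local_op_comp HA HB.
pose M := (\sum_(i < K) e i)%N.
have Py m : local_op (fun i => pw (G i) m) y = y.
  elim: m => [|m IH]; first exact: local_op1.
  have -> : local_op (fun i => pw (G i) m.+1) y = local_op (mulfam G (fun i => pw (G i) m)) y by [].
  by rewrite -local_op_comp IH.
pose H := fun i => pw (G i) M.
have rk i : \rank (A i *m H i) = \rank (H i).
  apply/eqP; rewrite eqn_leq mxrankM_maxr /=.
  have leM : (e i <= M)%N by rewrite /M (bigD1 i) //= leq_addr.
  rewrite /H -(pw_stable (G i) leM) pwS /G /mulfam -mulmxA.
  exact: mxrankM_maxr.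
exists (fun i => colext (A i) (H i)); split.
  by move=> i; case: (colextP (rk i)).
rewrite -{1}(Py M) local_op_comp -HA -{2}(Py M) local_op_comp.
by apply: local_op_ext => i; rewrite /mulfam; case: (colextP (rk i)).
Qed.
End WeakStrong.
Section Flat.
Variable F : fieldType.
Variables (K' : nat) (d : nat -> nat).
Local Notation K := K'.+1.

Definition E (c : nat) : 'I_K -> nat :=
  fun i => (if nat_of_ord i == 0%N then c else (d i).-1).+1.

Definition Q := midx (E 0).

Definition cvt c c' (i : 'I_K) (x : 'I_(E c i)) : 'I_(E c' i) := insubd ord0 (val x).

Lemma E_neq0 c (i : 'I_K) : nat_of_ord i != 0%N -> E c i = (d i).-1.+1.
Proof. by rewrite /E => /negbTE ->. Qed.

Lemma E_eq0 c (i : 'I_K) : nat_of_ord i = 0%N -> E c i = c.+1.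
Proof. by rewrite /E => ->. Qed.

Lemma ltE_neq c c' (i : 'I_K) (v : nat) : nat_of_ord i != 0%N ->
  (v < E c i)%N = (v < E c' i)%N.
Proof. by rewrite /E => /negbTE ->. Qed.

Lemma ltE_eq c (i : 'I_K) (v : nat) : nat_of_ord i = 0%N ->
  (v < E c i)%N = (v < c.+1)%N.
Proof. by rewrite /E => ->. Qed.

Lemma val_cvt c c' i (x : 'I_(E c i)) : nat_of_ord i != 0%N -> val (cvt c' x) = val x.
Proof.
move=> Hi; rewrite /cvt val_insubd; case: ifP => // /negP[].
by have := ltn_ord x; rewrite (@ltE_neq c c' i _ Hi).
Qed.

Lemma cvtK c c' i (x : 'I_(E c i)) : nat_of_ord i != 0%N -> cvt c (cvt c' x) = x.
Proof. by move=> Hi; apply: val_inj; rewrite !val_cvt. Qed.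

Lemma cvt_cvt c c' c'' i (x : 'I_(E c i)) : nat_of_ord i != 0%N ->
  cvt c'' (cvt c' x) = cvt c'' x.
Proof. by move=> Hi; apply: val_inj; rewrite !val_cvt. Qed.

Lemma I1_eq c i (x y : 'I_(E c i)) : nat_of_ord i = 0%N -> c = 0%N -> x = y.
Proof.
move=> Hi Hc; subst c; apply: val_inj; have := ltn_ord x; have := ltn_ord y.
rewrite !(@ltE_eq 0 i _ Hi) !ltnS !leqn0.
by move=> /eqP Hy /eqP Hx; exact: (etrans Hx (esym Hy)).
Qed.

Definition jv c (a : 'I_c.+1) (q : Q) (i : 'I_K) : nat :=
  if nat_of_ord i == 0%N then val a else val (q i).

Lemma jv_neq0 c a q i : nat_of_ord i != 0%N -> @jv c a q i = val (q i).
Proof. by rewrite /jv => /negbTE ->. Qed.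

Definition join0 c (a : 'I_c.+1) (q : Q) : midx (E c) :=
  [ffun i => (insubd ord0 (jv a q i) : 'I_(E c i))].

Arguments join0 : clear implicits.
Arguments join0 c a q.

Definition splitq c (j : midx (E c)) : Q := [ffun i => cvt 0 (j i)].

Lemma join0_o0 c a q : join0 c a q ord0 = a.
Proof. by rewrite ffunE; apply: val_inj; rewrite /= val_insubd ltn_ord. Qed.

Lemma join0_neq0 c a q i : nat_of_ord i != 0%N -> join0 c a q i = cvt c (q i).
Proof. by move=> Hi; rewrite ffunE jv_neq0. Qed.

Lemma split_join c a q : splitq (join0 c a q) = q.
Proof.
apply/ffunP => i; rewrite ffunE.
have [Hi|Hi] := eqVneq (nat_of_ord i) 0%N; first exact: I1_eq.
by rewrite join0_neq0 // cvtK.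
Qed.

Lemma join_split c (j : midx (E c)) : join0 c (j ord0) (splitq j) = j.
Proof.
apply/ffunP => i.
have [Hi|Hi] := eqVneq (nat_of_ord i) 0%N.
  have Hi' : i = ord0 by apply: val_inj; exact: Hi.
  by subst i; rewrite join0_o0.
by rewrite join0_neq0 // ffunE cvtK.
Qed.

Lemma sum_split c (f : midx (E c) -> F) :
  \sum_(j : midx (E c)) f j = \sum_(a : 'I_c.+1) \sum_(q : Q) f (join0 c a q).
Proof.
rewrite pair_big /=.
rewrite (reindex (fun p : 'I_c.+1 * Q => join0 c p.1 p.2)) //.
exists (fun j : midx (E c) => (j ord0, splitq j)) => [p _|j _].
  by rewrite join0_o0 split_join; case: p.
by rewrite join_split.
Qed.


Definition flat c (x : tensor F (E c)) : 'M[F]_(c.+1, #|Q|) :=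
  \matrix_(a, t) x (join0 c a (enum_val t)).

Definition unflat c (X : 'M[F]_(c.+1, #|Q|)) : tensor F (E c) :=
  fun j => X (j ord0) (enum_rank (splitq j)).

Lemma flat_unflat c X : flat (@unflat c X) = X.
Proof.
apply/matrixP => a t; rewrite mxE /unflat join0_o0 split_join.
by rewrite fintype.enum_valK.
Qed.

Lemma unflat_flat c (x : tensor F (E c)) : unflat (flat x) = x.
Proof.
apply: functional_extensionality => j.
by rewrite /unflat mxE fintype.enum_rankK join_split.
Qed.

Lemma flat_inj c (x y : tensor F (E c)) : flat x = flat y -> x = y.
Proof. by move=> H; rewrite -(unflat_flat x) H unflat_flat. Qed.

Lemma sumQ (G : 'I_#|Q| -> F) : \sum_t G t = \sum_(q : Q) G (enum_rank q).
Proof.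
rewrite (reindex (@enum_rank Q)) //.
by exists enum_val => t _; rewrite ?fintype.enum_rankK ?fintype.enum_valK.
Qed.

Definition fQ c (L : forall i : 'I_K, 'M[F]_(E c i)) : forall i : 'I_K, 'M[F]_(E 0 i) :=
  fun i => \matrix_(a, b) (if nat_of_ord i == 0%N then 1 else L i (cvt c a) (cvt c b)).

Definition RQ c (L : forall i : 'I_K, 'M[F]_(E c i)) : 'M[F]_#|Q| :=
  \matrix_(t, t') kr (fQ L) (enum_val t) (enum_val t').

Lemma kr_ext e (L L' : forall i : 'I_K, 'M[F]_(e i)) j j' :
  (forall i, L i = L' i) -> kr L j j' = kr L' j j'.
Proof. by move=> H; apply: eq_bigr => i _; rewrite H. Qed.

Lemma kr_split c L a b q q' :
  kr L (join0 c a q) (join0 c b q') = L ord0 a b * kr (@fQ c L) q q'.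
Proof.
rewrite /kr !big_ord_recl !join0_o0 mxE /= mul1r; congr (_ * _).
by apply: eq_bigr => i _; rewrite mxE /= !join0_neq0.
Qed.

Lemma flat_local_op c L (x : tensor F (E c)) :
  flat (local_op L x) = L ord0 *m flat x *m (RQ L)^T.
Proof.
apply/matrixP => a t; rewrite !mxE local_opE sum_split.
under eq_bigr do under eq_bigr do rewrite kr_split.
under [RHS]eq_bigr do rewrite !mxE big_distrl.
rewrite sumQ exchange_big; apply: eq_bigr => b _; apply: eq_bigr => q _.
by rewrite !mxE fintype.enum_rankK mulrAC.
Qed.


Lemma fQ_mul c (L M : forall i : 'I_K, 'M[F]_(E c i)) i :
  fQ L i *m fQ M i = fQ (mulfam L M) i.
Proof.
apply/matrixP => a b; rewrite /fQ !mxE.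
under eq_bigr do rewrite !mxE.
have [Hi|Hi] := eqVneq (nat_of_ord i) 0%N.
  by rewrite mulr1 sumr_const card_ord (E_eq0 0 Hi).
rewrite /mulfam.
rewrite (reindex (@cvt c 0 i)) /=; last first.
  by exists (@cvt 0 c i) => k _; rewrite cvtK.
by apply: eq_bigr => k _; rewrite cvtK.
Qed.

Definition trfam e (L : forall i : 'I_K, 'M[F]_(e i)) : forall i, 'M[F]_(e i) :=
  fun i => (L i)^T.

Definition invfam e (L : forall i : 'I_K, 'M[F]_(e i)) : forall i, 'M[F]_(e i) :=
  fun i => invmx (L i).

Lemma RQ_mul c (L M : forall i : 'I_K, 'M[F]_(E c i)) :
  RQ L *m RQ M = RQ (mulfam L M).
Proof.
apply/matrixP => t t''; rewrite !mxE sumQ.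
under eq_bigr do rewrite !mxE fintype.enum_rankK.
rewrite kr_mul; apply: kr_ext => i.
exact: fQ_mul.
Qed.

Lemma RQ_tr c (L : forall i : 'I_K, 'M[F]_(E c i)) : RQ (trfam L) = (RQ L)^T.
Proof.
apply/matrixP => t t'; rewrite !mxE; apply: eq_bigr => i _; rewrite /fQ !mxE.
by case: ifP.
Qed.

Lemma RQ1 c : RQ (fun i : 'I_K => (1%:M : 'M[F]_(E c i))) = 1%:M.
Proof.
apply/matrixP => t t'; rewrite !mxE.
rewrite (@kr_ext _ _ (fun i => 1%:M)) ?kr1 ?(inj_eq (@enum_val_inj _ _)) // => i.
apply/matrixP => a b; rewrite /fQ !mxE.
have [Hi|Hi] := eqVneq (nat_of_ord i) 0%N.
  by rewrite (@I1_eq 0 i a b Hi) // eqxx.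
rewrite (inj_eq (can_inj (fun x => @cvtK 0 c i x Hi))).
done.
Qed.

Definition mk c (M0 : 'M[F]_c.+1) c' (T : forall i : 'I_K, 'M[F]_(E c' i)) :
  forall i : 'I_K, 'M[F]_(E c i) :=
  fun i => \matrix_(a, b) (if nat_of_ord i == 0%N then
      M0 (insubd ord0 (val a)) (insubd ord0 (val b)) else T i (cvt c' a) (cvt c' b)).

Lemma mk_o0 c M0 c' T : @mk c M0 c' T ord0 = M0.
Proof. by apply/matrixP => a b; rewrite mxE /= !valKd. Qed.

Lemma RQ_mk c M0 c' T : RQ (@mk c M0 c' T) = RQ T.
Proof.
apply/matrixP => t t'; rewrite !mxE; apply: eq_bigr => i _; rewrite /fQ /mk !mxE.
have [Hi|Hi] := eqVneq (nat_of_ord i) 0%N.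
  by [].
by rewrite !cvt_cvt.
Qed.

End Flat.

Lemma cardQ K' (d : nat -> nat) :
  (forall i : nat, (1 <= i < K'.+1)%N -> (2 <= d i)%N) ->
  #|Q K' d| = (\prod_(1 <= i < K'.+1) d i)%N.
Proof.
move=> Hd; rewrite card_dep_ffun foldrE big_image /=.
under eq_bigr do rewrite card_ord.
rewrite big_ord_recl /= mul1n big_add1 /= big_mkord.
apply: eq_bigr => i _; rewrite /E /=; apply: prednK.
by apply: leq_trans (Hd i.+1 _); rewrite //= ltnS ltn_ord.
Qed.
Section Core.
Variable F : fieldType.
Variables (K' : nat) (d : nat -> nat) (c0 ck : nat).
Local Notation K := K'.+1.
Local Notation Q := (Q K' d).
Local Notation E := (@E K' d).
Hypothesis hN : #|Q| = (c0.+1 + ck.+1)%N.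

Lemma flat_le c (x y : tensor F (E c)) :
  slocc_le x y -> (\rank (flat x) <= \rank (flat y))%N.
Proof.
move=> [L <-]; rewrite flat_local_op.
by apply: leq_trans (mxrankM_maxl _ _) _; apply: mxrankM_maxr.
Qed.

Lemma max_full (phi : tensor F (E c0)) : slocc_maximal phi -> \rank (flat phi) = c0.+1.
Proof.
move=> Hmax; set P := flat phi.
apply/eqP; rewrite eqn_leq rank_leq_row /= leqNgt; apply/negP => lt.
pose Psi := (pid_mx c0.+1 : 'M[F]_(c0.+1, #|Q|)) *m row_ebase P.
have rPsi : \rank Psi = c0.+1.
  by rewrite mxrankMfree ?row_free_unit ?row_ebase_unit // rank_pid_mx // hN leq_addr.
pose A := col_ebase P *m (pid_mx (\rank P) : 'M[F]_c0.+1).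
have le1 : slocc_le phi (unflat Psi).
  exists (mk A (fun i : 'I_K => (1%:M : 'M[F]_(E c0 i)))); apply: flat_inj.
  rewrite flat_local_op mk_o0 RQ_mk RQ1 trmx1 mulmx1 flat_unflat /A /Psi.
  rewrite -mulmxA (mulmxA (pid_mx _)) mul_pid_mx.
  have rl := rank_leq_row P.
  rewrite (minn_idPl rl) (minn_idPr (rl : (\rank P <= E c0 ord0)%N)).
  by rewrite mulmxA mulmx_ebase.
have := flat_le (Hmax _ le1); rewrite flat_unflat rPsi => H.
by move: (leq_trans lt H); rewrite ltnn.
Qed.

Definition Sm (phi : tensor F (E c0)) : 'M[F]_(ck.+1, #|Q|) :=
  (pid_mx ck.+1 : 'M[F]_(ck.+1, #|Q|)) *m row_ebase (kermx (flat phi)^T).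

Definition sv phi : tensor F (E ck) := unflat (Sm phi).

Lemma Sm_props phi : \rank (flat phi) = c0.+1 ->
  \rank (Sm phi) = ck.+1 /\ Sm phi *m (flat phi)^T = 0.
Proof.
move=> rP; set Kk := kermx (flat phi)^T.
have rK : \rank Kk = ck.+1 by rewrite mxrank_ker mxrank_tr rP hN addKn.
have leN : (ck.+1 <= #|Q|)%N by rewrite hN leq_addl.
split.
  by rewrite mxrankMfree ?row_free_unit ?row_ebase_unit // rank_pid_mx.
apply/sub_kermxP; rewrite /Sm -/Kk.
have -> : (pid_mx ck.+1 : 'M[F]_(ck.+1, #|Q|)) *m row_ebase Kk =
   (pid_mx ck.+1 : 'M[F]_(ck.+1, #|Q|)) *m (pid_mx (\rank Kk) *m row_ebase Kk).
  by rewrite mulmxA mul_pid_mx rK minnn (minn_idPr leN).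
have -> : (pid_mx (\rank Kk) : 'M[F]_#|Q|) *m row_ebase Kk = invmx (col_ebase Kk) *m Kk.
  by rewrite -{4}(mulmx_ebase Kk) -!mulmxA mulKmx ?col_ebase_unit.
by rewrite mulmxA submxMl.
Qed.

Lemma charac p (P : 'M[F]_(c0.+1, #|Q|)) (S : 'M[F]_(ck.+1, #|Q|)) (Y : 'M[F]_(p, #|Q|)) :
  \rank P = c0.+1 -> \rank S = ck.+1 -> S *m P^T = 0 -> Y *m S^T = 0 -> (Y <= P)%MS.
Proof.
move=> rP rS HS HY.
have sub : (P <= kermx S^T)%MS.
  by apply/sub_kermxP; rewrite -[P]trmxK -trmx_mul HS trmx0.
have rK : \rank (kermx S^T) = c0.+1 by rewrite mxrank_ker mxrank_tr rS hN addnK.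
have KP : (kermx S^T <= P)%MS by rewrite -(mxrank_leqif_sup sub).2 rP rK.
by apply: submx_trans KP; apply/sub_kermxP.
Qed.

Lemma key (phi psi : tensor F (E c0)) : slocc_maximal phi -> slocc_maximal psi ->
  slocc_le (sv phi) (sv psi) -> slocc_le (sv psi) (sv phi) -> slocc_le phi psi.
Proof.
move=> Mphi Mpsi h1 h2.
have [C [uC HC]] := weak_strong h1 h2.
have rphi := max_full Mphi; have rpsi := max_full Mpsi.
have [rSphi Zphi] := Sm_props rphi; have [rSpsi Zpsi] := Sm_props rpsi.
have HS : Sm phi = C ord0 *m Sm psi *m (RQ C)^T.
  by rewrite -(flat_unflat (Sm phi)) -/(sv phi) -HC flat_local_op /sv flat_unflat.
have RRi : RQ C *m RQ (invfam C) = 1%:M.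
  rewrite RQ_mul.
  have -> : mulfam C (invfam C) = (fun i : 'I_K => 1%:M).
    by apply: functional_extensionality_dep => i; rewrite /mulfam /invfam mulmxV.
  exact: RQ1.
have Z1 : Sm psi *m (RQ C)^T *m (flat phi)^T = 0.
  have := congr1 (mulmx (invmx (C ord0))) Zphi.
  by rewrite HS mulmx0 !mulmxA mulVmx ?uC // mul1mx.
have Z2 : flat phi *m RQ C *m (Sm psi)^T = 0.
  by have := congr1 trmx Z1; rewrite !trmx_mul !trmxK trmx0 mulmxA.
have sub : (flat phi *m RQ C <= flat psi)%MS := charac rpsi rSpsi Zpsi Z2.
exists (mk (flat phi *m RQ C *m pinvmx (flat psi)) (trfam (invfam C))).
apply: flat_inj; rewrite flat_local_op mk_o0 RQ_mk RQ_tr trmxK.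
by rewrite mulmxKpV // -mulmxA RRi mulmx1.
Qed.

Theorem core : finitely_many_classes F (E ck) -> finitely_many_maximal_classes F (E c0).
Proof.
move=> [n [r Hr]].
pose P m (phi : tensor F (E c0)) := slocc_maximal phi /\ slocc_equiv (sv phi) (r m).
pose rep m := epsilon (inhabits (fun _ : midx (E c0) => (0 : F))) (P m).
exists n, rep => phi Hphi.
have [m [H1 H2]] := Hr (sv phi); exists m.
have [Hmax [H3 H4]] : P m (rep m).
  by apply: epsilon_spec; exists phi; split.
have e1 := slocc_le_trans H1 H4.
have e2 := slocc_le_trans H3 H2.
by split; apply: key.
Qed.
End Core.

Unset Implicit Arguments.
Close Scope ring_scope.
From Stdlib Require Import ClassicalEpsilon.
Theorem mainTheorem11 (C : numClosedFieldType) (K : nat) (d : nat -> nat) (k : nat) :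
  (3 <= K)%N ->
  (forall i : nat, (1 <= i < K)%N -> (2 <= d i)%N) ->
  (1 <= k)%N ->
  d 0%N = (\prod_(1 <= i < K) d i - k)%N ->
  (1 <= d 0%N)%N ->
  finitely_many_classes C (fun i : 'I_K => if nat_of_ord i == 0%N then k else d i) ->
  finitely_many_maximal_classes C (fun i : 'I_K => d i).
Proof.
case: K => [//|K'] HK Hd Hk Hd0 Hd0pos Hfin.
have dpos (i : 'I_K'.+1) : nat_of_ord i != 0%N -> (0 < d i)%N.
  move=> Hi; apply: leq_trans (Hd i _) => //.
  by rewrite lt0n Hi ltn_ord.
have eK : (fun i : 'I_K'.+1 => if nat_of_ord i == 0%N then k else d i) = @E K' d k.-1.
  apply: functional_extensionality => i; rewrite /E.
  by case: ifP => Hi; rewrite prednK // dpos // Hi.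
have eD : (fun i : 'I_K'.+1 => d i) = @E K' d (d 0%N).-1.
  apply: functional_extensionality => i; rewrite /E.
  case: ifP => Hi; last by rewrite prednK // dpos // Hi.
  by rewrite (eqP Hi) prednK.
rewrite eK in Hfin; rewrite eD.
apply: (core _ Hfin).
rewrite cardQ // !prednK // Hd0 subnK //.
by move: Hd0pos; rewrite Hd0 subn_gt0 => /ltnW.
Qed.
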